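(* Let $X\in\mathbb{R}^{m\times n}_+$, $W\in\mathbb{R}^{m\times r}$, $H\in\mathbb{R}^{r\times n}_+$ with $X=WH$ satisfying the facet-based conditions (FBC) for some parameter $s$, where $d=\operatorname{rank}(X)$. Let $\bar x=\frac1n\sum_{j=1}^n X(:,j)$, $e$ the all-ones vector, and assume $X-\bar x e^\top$ has rank $d-1$ with compact SVD $X-\bar xe^\top=U\Sigma V^\top$, $U\in\mathbb{R}^{m\times(d-1)}$ with orthonormal columns. Let $\tilde X=U^\top(X-\bar xe^\top)\in\mathbb{R}^{(d-1)\times n}$ and $\tilde W=U^\top(W-\bar xe^\top)$ (so $0\in\operatorname{conv}(\tilde X)$, $\operatorname{rank}(\tilde X)=d-1$ and $\tilde X=\tilde WH$). Then the set of vertices of $\operatorname{conv}(\tilde X)^*$ contains all the vertices of $\operatorname{conv}(\tilde W)^*$.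
   Context: For a matrix $M$, $\operatorname{conv}(M)$ denotes the convex hull of its columns. For a set $\mathcal A$ containing the origin in its interior, its dual is $\mathcal A^*=\{y: x^\top y\le 1 \text{ for all } x\in\mathcal A\}$; in particular $\operatorname{conv}(\tilde X)^*=\{\theta:\tilde X^\top\theta\le e\}$. A facet of a polytope is a face of dimension one less than the dimension of the polytope. The unit simplex is $\Delta^r=\{x\in\mathbb{R}^r: x\ge 0,\ \sum_i x_i=1\}$. Facet-based conditions (FBC) with parameter $s$ for $X=WH$, where $d=\operatorname{rank}(X)$: (a) no column of $W$ lies in the convex hull of the other columns of $W$; (b) $H(:,j)\in\Delta^r$ for all $j$; (c) each facet of $\operatorname{conv}(W)$ contains at least $s\ge d$ distinct columns of $X$, and among them at least $d-1$ generate that facet (the convex hull of these $s$ columns has dimension $d-2$); (d) every facet of $\operatorname{conv}(X)$ which is not a facet of $\operatorname{conv}(W)$ contains strictly fewer than $s$ distinct columns of $X$. *)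

(* Defs.v *)
From mathcomp Require Import all_boot all_order all_algebra.
Set Implicit Arguments. Unset Strict Implicit. Unset Printing Implicit Defensive.
Import Order.TTheory GRing.Theory Num.Theory.
Local Open Scope ring_scope.

Section Defs.
Variable R : realFieldType.

Definition in_simplex (k : nat) (h : 'cV[R]_k) : Prop :=
  (forall i, 0 <= h i 0) /\ \sum_i h i 0 = 1.

Definition conv_cols (m k : nat) (M : 'M[R]_(m, k)) : 'cV[R]_m -> Prop :=
  fun v => exists h : 'cV[R]_k, in_simplex h /\ v = M *m h.

Definition conv_cols_sub (m k : nat) (M : 'M[R]_(m, k)) (J : {set 'I_k})
  : 'cV[R]_m -> Prop :=
  fun v => exists h : 'cV[R]_k,
    in_simplex h /\ (forall i, i \notin J -> h i 0 = 0) /\ v = M *m h.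

Definition has_aff_indep (m : nat) (S : 'cV[R]_m -> Prop) (k : nat) : Prop :=
  exists (p : 'cV[R]_m) (Q : 'M[R]_(m, k)),
    S p /\ (forall j, S (p + col j Q)) /\ \rank Q = k.

(* S is nonempty and its (affine) dimension is k *)
Definition aff_dim (m : nat) (S : 'cV[R]_m -> Prop) (k : nat) : Prop :=
  has_aff_indep S k /\ ~ has_aff_indep S k.+1.

Definition is_face (m : nat) (P F : 'cV[R]_m -> Prop) : Prop :=
  exists (a : 'cV[R]_m) (b : R),
    (forall x, P x -> (a^T *m x) 0 0 <= b) /\
    (forall x, F x <-> (P x /\ (a^T *m x) 0 0 = b)).

Definition is_facet (m : nat) (P F : 'cV[R]_m -> Prop) : Prop :=
  is_face P F /\ exists k, aff_dim P k.+1 /\ aff_dim F k.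

Definition distinct_cols_in (m n : nat) (X : 'M[R]_(m, n)) (J : {set 'I_n})
  (F : 'cV[R]_m -> Prop) : Prop :=
  (forall j, j \in J -> F (col j X)) /\
  (forall i j, i \in J -> j \in J -> col i X = col j X -> i = j).

Definition FBC (m n r : nat) (X : 'M[R]_(m, n)) (W : 'M[R]_(m, r))
  (H : 'M[R]_(r, n)) (s : nat) : Prop :=
  let d := \rank X in
  (forall i : 'I_r, ~ exists h : 'cV[R]_r,
      in_simplex h /\ h i 0 = 0 /\ col i W = W *m h) /\
  (forall j : 'I_n, in_simplex (col j H)) /\
  (d <= s)%N /\
  (forall F, is_facet (conv_cols W) F ->
     exists J : {set 'I_n}, distinct_cols_in X J F /\ (s <= #|J|)%N /\
       aff_dim (conv_cols_sub X J) (d - 2)) /\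
  (forall F, is_facet (conv_cols X) F -> ~ is_facet (conv_cols W) F ->
     forall J : {set 'I_n}, distinct_cols_in X J F -> (#|J| < s)%N).

Definition dual (k : nat) (A : 'cV[R]_k -> Prop) : 'cV[R]_k -> Prop :=
  fun y => forall x, A x -> (x^T *m y) 0 0 <= 1.

Definition is_vertex (k : nat) (S : 'cV[R]_k -> Prop) (y : 'cV[R]_k) : Prop :=
  S y /\ forall a b (t : R), S a -> S b -> 0 < t -> t < 1 ->
    y = t *: a + (1 - t) *: b -> a = b.

Definition mean_col (m n : nat) (X : 'M[R]_(m, n)) : 'cV[R]_m :=
  (n%:R)^-1 *: (X *m const_mx 1).

End Defs.

(* Main.v *)
Require Import Defs.
From mathcomp Require Import all_boot all_order all_algebra.
From mathcomp Require Import ring lra zify.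
Import Order.TTheory GRing.Theory Num.Theory.
Local Open Scope ring_scope.

Module Helpers.
Set Implicit Arguments. Unset Strict Implicit. Unset Printing Implicit Defensive.


Section Aux.
Variable R : realFieldType.

Lemma dot11 m (a x : 'cV[R]_m) : (a^T *m x) 0 0 = (x^T *m a) 0 0.
Proof. by rewrite -{1}(trmxK x) -trmx_mul mxE. Qed.

Lemma sum_simplex k (h : 'cV[R]_k) : in_simplex h -> const_mx 1 *m h = 1%:M.
Proof.
case=> _ hs; apply/matrixP => i j; rewrite !ord1 !mxE (eq_bigr (fun l => h l 0)) ?hs //.
by move=> l _; rewrite mxE mul1r.
Qed.

Lemma affine_simplex m k (M : 'M[R]_(m,k)) (c : 'cV_m) h : in_simplex h ->
  M *m h - c = (M - c *m const_mx 1) *m h.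
Proof. by move=> hs; rewrite mulmxBl -mulmxA sum_simplex // mulmx1. Qed.

Lemma simplex_mul r n (H : 'M[R]_(r,n)) h : (forall j, in_simplex (col j H)) ->
  in_simplex h -> in_simplex (H *m h).
Proof.
move=> hH [h0 h1]; split.
  move=> i; rewrite mxE; apply: sumr_ge0 => j _; apply: mulr_ge0 => //.
  by have [+ _] := hH j => /(_ i); rewrite mxE.
rewrite (eq_bigr (fun i => \sum_j H i j * h j 0)); last by move=> i _; rewrite mxE.
rewrite exchange_big /= -h1; apply: eq_bigr => j _.
rewrite -mulr_suml; have [_ hs] := hH j.
by rewrite (eq_bigr (fun i => col j H i 0)) ?hs ?mul1r // => i _; rewrite mxE.
Qed.

Lemma delta_simplex k (j : 'I_k) : in_simplex (delta_mx j 0 : 'cV[R]_k).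
Proof.
split; first by move=> i; rewrite mxE ler0n.
rewrite (bigD1 j) //= big1 ?addr0; first by rewrite mxE !eqxx.
by move=> i /negPf hij; rewrite mxE hij.
Qed.

Lemma conv_col m k (M : 'M[R]_(m,k)) j : conv_cols M (col j M).
Proof. by exists (delta_mx j 0); split; [exact: delta_simplex | rewrite colE]. Qed.

Lemma unif_simplex k : (0 < k)%N -> in_simplex (const_mx (k%:R^-1) : 'cV[R]_k).
Proof.
move=> k0; split; first by move=> i; rewrite mxE invr_ge0 ler0n.
rewrite (eq_bigr (fun _ => k%:R^-1)); last by move=> i _; rewrite mxE.
by rewrite sumr_const card_ord -[_ *+ k]mulr_natr mulVf // pnatr_eq0 -lt0n.
Qed.

Lemma dot_simplex k (h g : 'cV[R]_k) : in_simplex h -> (forall j, g j 0 <= 1) ->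
  (h^T *m g) 0 0 <= 1.
Proof.
case=> h0 h1 hg; rewrite mxE -h1; apply: ler_sum => j _.
by rewrite mxE -{2}(mulr1 (h j 0)); apply: ler_wpM2l.
Qed.

Lemma dualP m k (M : 'M[R]_(m,k)) y :
  dual (conv_cols M) y <-> forall j, (M^T *m y) j 0 <= 1.
Proof.
split.
  move=> D j; have := D _ (conv_col M j).
  by rewrite tr_col -row_mul mxE.
move=> hg x [h [hs ->]]; rewrite trmx_mul -mulmxA; exact: dot_simplex.
Qed.

Lemma conv_sub_conv m n (X : 'M[R]_(m,n)) J x : conv_cols_sub X J x -> conv_cols X x.
Proof. by case=> h [hs [_ ->]]; exists h. Qed.

Lemma conv_mulH m r n (W : 'M[R]_(m,r)) (H : 'M[R]_(r,n)) x :
  (forall j, in_simplex (col j H)) -> conv_cols (W *m H) x -> conv_cols W x.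
Proof.
move=> hH [h [hs ->]]; exists (H *m h); split; last by rewrite mulmxA.
exact: simplex_mul.
Qed.

End Aux.


Section Aff.
Variable R : realFieldType.

Lemma row_free_rowsub p q n (B : 'M[R]_(q,n)) (h : 'I_p -> 'I_q) :
  row_free B -> injective h -> row_free (rowsub h B).
Proof.
case/row_freeP => C BC hinj; apply/row_freeP.
have E : rowsub h (1%:M : 'M[R]_q) *m (rowsub h 1%:M)^T = 1%:M.
  apply/matrixP => i j; rewrite !mxE (bigD1 (h i)) //= big1 ?addr0.
    by rewrite !mxE eqxx mul1r (inj_eq hinj) eq_sym.
  by move=> l /negPf nl; rewrite !mxE eq_sym nl mul0r.
exists (C *m (rowsub h 1%:M)^T).
by rewrite rowsubE mulmxA -(mulmxA _ B) BC mulmx1.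
Qed.

Lemma has_aff_indep_cols m n' (S : 'cV[R]_m -> Prop) p (M : 'M[R]_(m,n')) k :
  S p -> (forall j, S (p + col j M)) -> (k <= \rank M)%N -> has_aff_indep S k.
Proof.
move=> Sp SM hk.
have hk' : (k <= \rank M^T)%N by rewrite mxrank_tr.
pose f := maxrankfun M^T.
pose g := fun i : 'I_k => f (widen_ord hk' i).
exists p, (rowsub g M^T)^T; split => //; split.
  by move=> j; rewrite -tr_row row_rowsub tr_row trmxK.
rewrite mxrank_tr; apply/eqP.
have -> : rowsub g M^T = rowsub (widen_ord hk') (rowsub f M^T) by rewrite -rowsub_comp.
apply: row_free_rowsub; first exact: maxrowsub_free.
move=> x y /(congr1 val) /= => e; apply: val_inj. exact: e.
Qed.

Lemma has_mono m (S : 'cV[R]_m -> Prop) k k' :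
  has_aff_indep S k -> (k' <= k)%N -> has_aff_indep S k'.
Proof.
move=> [p [Q [Sp [SQ rQ]]]] hk; apply: (has_aff_indep_cols Sp SQ).
by rewrite rQ.
Qed.

Lemma has_sub m (S S' : 'cV[R]_m -> Prop) k :
  (forall x, S x -> S' x) -> has_aff_indep S k -> has_aff_indep S' k.
Proof.
move=> hS [p [Q [Sp [SQ rQ]]]]; exists p, Q; split; first exact: hS.
by split => // j; apply: hS.
Qed.

Lemma aff_dim_uniq m (S : 'cV[R]_m -> Prop) a b :
  aff_dim S a -> aff_dim S b -> a = b.
Proof.
move=> [ha na] [hb nb]; apply/eqP; rewrite eqn_leq; apply/andP; split.
  by rewrite leqNgt; apply/negP => lt; apply: nb; apply: has_mono ha _.
by rewrite leqNgt; apply/negP => lt; apply: na; apply: has_mono hb _.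
Qed.

Lemma rank_colmx p n (M : 'M[R]_(p,n)) (v : 'rV_n) :
  ~~ (v <= M)%MS -> \rank (col_mx M v) = (\rank M).+1.
Proof.
move=> nv; apply/eqP; rewrite eqn_leq; apply/andP; split.
  rewrite -addsmxE; apply: leq_trans (mxrank_adds_leqif M v).1 _.
  by rewrite -[(\rank M).+1]addn1 leq_add2l rank_leq_row.
apply: rank_ltmx; rewrite ltmxE -addsmxE addsmxSl /=.
by rewrite col_mx_sub submx_refl.
Qed.

Lemma not_sub_sep p n (M : 'M[R]_(p,n)) (v : 'rV_n) (th : 'cV_n) :
  M *m th = 0 -> v *m th != 0 -> ~~ (v <= M)%MS.
Proof.
move=> Mth vth; apply/negP => /submxP [x ex]; move: vth.
by rewrite ex -mulmxA Mth mulmx0 eqxx.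
Qed.

Lemma entry_cT m k (Q : 'M[R]_(m,k)) (a : 'cV_m) j :
  (Q^T *m a) j 0 = (a^T *m col j Q) 0 0.
Proof. by rewrite dot11 tr_col -row_mul [RHS]mxE. Qed.

Lemma dotB m (a x y : 'cV[R]_m) :
  (a^T *m (x - y)) 0 0 = (a^T *m x) 0 0 - (a^T *m y) 0 0.
Proof. by rewrite mulmxBr !mxE. Qed.

Lemma diffE m (q x c : 'cV[R]_m) : x = (q + x - c) - (q - c).
Proof. by rewrite opprB addrA subrK addrC addKr. Qed.

Lemma span_diff m p k (q c : 'cV[R]_m) (Q : 'M[R]_(m,k)) (M : 'M[R]_(m,p)) :
  ((q - c)^T <= M^T)%MS -> (forall j, ((q + col j Q - c)^T <= M^T)%MS) ->
  (Q^T <= M^T)%MS.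
Proof.
move=> hq hQ; apply/row_subP => j; rewrite -tr_col (diffE q (col j Q) c).
rewrite linearB /=; apply: addmx_sub => //; by rewrite eqmx_opp.
Qed.

Lemma has_in_span m p (S : 'cV[R]_m -> Prop) c (M : 'M[R]_(m,p)) k :
  (forall x, S x -> ((x - c)^T <= M^T)%MS) -> has_aff_indep S k -> (k <= \rank M)%N.
Proof.
move=> hS [q [Q [Sq [SQ rQ]]]]; rewrite -rQ -mxrank_tr -(mxrank_tr M).
apply: mxrankS; apply: (span_diff (q := q) (c := c)); first exact: hS.
by move=> j; apply: hS.
Qed.

Lemma has_in_hyp m p (S : 'cV[R]_m -> Prop) c (M : 'M[R]_(m,p)) (a : 'cV_m) beta k :
  beta != 0 ->
  (forall x, S x -> ((x - c)^T <= M^T)%MS /\ (a^T *m (x - c)) 0 0 = beta) ->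
  has_aff_indep S k -> (k.+1 <= \rank M)%N.
Proof.
move=> b0 hS [q [Q [Sq [SQ rQ]]]].
have QM : (Q^T <= M^T)%MS.
  apply: (span_diff (q := q) (c := c)); first exact: (hS _ Sq).1.
  by move=> j; apply: (hS _ (SQ j)).1.
have Qa : Q^T *m a = 0.
  apply/matrixP => j i; rewrite (ord1 i) entry_cT (diffE q (col j Q) c) dotB.
  by rewrite (hS _ (SQ j)).2 (hS _ Sq).2 subrr mxE.
have qa : (q - c)^T *m a != 0.
  apply/negP => /eqP/matrixP/(_ 0 0); rewrite -dot11 (hS _ Sq).2 mxE.
  by move/eqP; rewrite (negPf b0).
have := rank_colmx (not_sub_sep Qa qa).
rewrite mxrank_tr rQ => <-; rewrite -(mxrank_tr M); apply: mxrankS.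
by rewrite col_mx_sub QM (hS _ Sq).1.
Qed.

End Aff.


Section Vert.
Variable R : realFieldType.

Definition dT r (T : {set 'I_r}) : 'M[R]_r := diag_mx (\row_j ((j \in T)%:R)).
Definition tight m r (M : 'M[R]_(m,r)) (y : 'cV[R]_m) : {set 'I_r} := [set j | (M^T *m y) j 0 == 1].

Lemma kernel_vec k r (N : 'M[R]_(k,r)) :
  (\rank N < k)%N -> exists2 d : 'cV_k, d != 0 & d^T *m N = 0.
Proof.
move=> lt; have nz : kermx N != 0.
  by rewrite -mxrank_eq0 mxrank_ker subn_eq0 -ltnNge.
have [i ri] : exists i, row i (kermx N) != 0.
  apply/existsP; apply: (contraNT _ nz) => /existsPn h.
  by apply/eqP/row_matrixP => i; rewrite row0; apply/eqP/negbNE/h.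
exists (row i (kermx N))^T; first by rewrite trmx_eq0.
by rewrite trmxK; apply/sub_kermxP; apply: row_sub.
Qed.

Lemma ker_tight k r (M : 'M[R]_(k,r)) (T : {set 'I_r}) (d : 'cV_k) :
  d^T *m (M *m dT T) = 0 -> forall j, j \in T -> (M^T *m d) j 0 = 0.
Proof.
move=> h j jT.
have E : (M^T *m d) j 0 = (d^T *m M) 0 j by rewrite -[d^T *m M]trmxK trmx_mul trmxK [RHS]mxE.
rewrite E; move: h; rewrite mulmxA /dT mul_mx_diag; move: (d^T *m M) => A.
by move/matrixP/(_ 0 j); rewrite !mxE jT mulr1.
Qed.

Lemma col_dT k r (M : 'M[R]_(k,r)) (T : {set 'I_r}) j :
  col j (M *m dT T) = (j \in T)%:R *: col j M.
Proof. by apply/colP => i; rewrite /dT mul_mx_diag !mxE mulrC. Qed.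

Lemma entry_add k r (M : 'M[R]_(r,k)) (z d : 'cV_k) (t : R) j :
  (M *m (z + t *: d)) j 0 = (M *m z) j 0 + t * (M *m d) j 0.
Proof. by rewrite mulmxDr -scalemxAr [LHS]mxE [X in _ + X = _]mxE. Qed.

Lemma dot_add k (u z d : 'cV[R]_k) (t : R) :
  (u^T *m (z + t *: d)) 0 0 = (u^T *m z) 0 0 + t * (u^T *m d) 0 0.
Proof. exact: entry_add. Qed.

Lemma vertex_span m k (Wt : 'M[R]_(k,m)) th :
  is_vertex (dual (conv_cols Wt)) th -> \rank (Wt *m dT (tight Wt th)) = k.
Proof.
case=> /dualP Dth ext; apply/eqP; rewrite eqn_leq rank_leq_row /= leqNgt.
apply/negP => lt.
have [d d0 dN] := kernel_vec lt.
set T := tight Wt th in dN.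
have gT := ker_tight dN.
pose f j := (Wt^T *m th) j 0.
pose g j := (Wt^T *m d) j 0.
pose s j := if j \in T then 1 else (1 - f j) / (1 + `|g j|).
pose e := \big[Order.min/1]_j s j.
have s0 : forall j, 0 < s j.
  move=> j; rewrite /s; case: ifP => // jT; apply: divr_gt0.
    rewrite subr_gt0 lt_def Dth andbT; move: jT; rewrite /T /tight inE.
    by move/negbT; rewrite eq_sym.
  by apply: ltr_wpDr => //; rewrite normr_ge0.
have e0 : 0 < e by apply: lt_bigmin.
have ej : forall j, e <= s j by move=> j; apply: bigmin_le.
have feas : forall sg : R, `|sg| <= 1 -> dual (conv_cols Wt) (th + (e * sg) *: d).
  move=> sg hsg; apply/dualP => j; rewrite entry_add -/(f j) -/(g j).
  have hes : e * sg * g j <= e * `|g j|.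
    rewrite -mulrA ler_wpM2l ?(ltW e0) //; apply: le_trans (ler_norm _) _.
    by rewrite normrM -[X in _ <= X]mul1r ler_wpM2r.
  case jT: (j \in T).
    by rewrite /g gT // mulr0 addr0 /f; move: jT; rewrite /T /tight inE => /eqP ->.
  have := ej j; rewrite /s jT ler_pdivlMr; last by apply: ltr_wpDr => //.
  have := normr_ge0 (g j); lra.
have half : (0 : R) < 1 / 2 by lra.
have ehalf : th = (1/2) *: (th + (e * 1) *: d) + (1 - 1/2) *: (th + (e * -1) *: d).
  by apply/matrixP => i j; rewrite !mxE; field.
have n1 : `|1 : R| <= 1 by rewrite normr1.
have n2 : `|-1 : R| <= 1 by rewrite normrN normr1.
have h1 : (1 : R) / 2 < 1 by lra.
have := ext _ _ (1/2) (feas 1 n1) (feas (-1) n2) half h1 ehalf.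
move/(congr1 (fun v => v - th)); rewrite ![th + _]addrC !addrK.
move/eqP; rewrite -subr_eq0 -scalerBl mulrN1 mulr1 opprK scaler_eq0.
rewrite (negPf d0) orbF; have : e + e != 0 by rewrite gt_eqF // addr_gt0.
by move/negPf ->.
Qed.

End Vert.
Arguments dT {R r} T.


Section Piv.
Variable R : realFieldType.

Lemma dotN k (u x : 'cV[R]_k) : (u^T *m - x) 0 0 = - (u^T *m x) 0 0.
Proof. by rewrite mulmxN; move: (u^T *m x) => A; rewrite mxE. Qed.

Lemma pivot_step D r (Rp : 'M[R]_(D,r)) (u z : 'cV[R]_D) :
  row_free Rp -> Rp *m (const_mx 1 : 'cV[R]_r) = 0 -> (forall j, (Rp^T *m z) j 0 <= 1) ->
  (\rank (Rp *m dT (tight Rp z)) < D)%N ->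
  exists z', (forall j, (Rp^T *m z') j 0 <= 1) /\ (u^T *m z') 0 0 <= (u^T *m z) 0 0 /\
     (\rank (Rp *m dT (tight Rp z)) < \rank (Rp *m dT (tight Rp z')))%N.
Proof.
move=> RF R1 fz lt.
have [d0 d0n dN0] := kernel_vec lt.
set T := tight Rp z in dN0 *.
pose d := if (u^T *m d0) 0 0 <= 0 then d0 else - d0.
have ud : (u^T *m d) 0 0 <= 0.
  rewrite /d; case: ifP => // /negbT; rewrite -ltNge => h.
  by rewrite dotN oppr_le0 ltW.
have dN : d^T *m (Rp *m dT T) = 0.
  by rewrite /d; case: ifP => _ //; rewrite raddfN /= mulNmx dN0 oppr0.
have dn : d != 0 by rewrite /d; case: ifP; rewrite ?oppr_eq0.
pose g := Rp^T *m d.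
have gT := ker_tight dN.
have [j0 gj0] : exists j0, 0 < g j0 0.
  apply/existsP; apply: contraT => /existsPn h.
  have gs : \sum_j g j 0 = 0.
    have : (const_mx 1 : 'rV[R]_r) *m g = 0.
      have -> : (const_mx 1 : 'rV[R]_r) = (const_mx 1 : 'cV[R]_r)^T.
        by apply/matrixP => i j; rewrite !mxE.
      by rewrite /g mulmxA -trmx_mul R1 trmx0 mul0mx.
    move/matrixP/(_ 0 0); rewrite [LHS]mxE [RHS]mxE => e; apply: (etrans _ e).
    by apply: eq_bigr => j _; rewrite [X in _ = X * _]mxE mul1r.
  have hn : forall k, predT k -> 0 <= - g k 0 by move=> k _; rewrite oppr_ge0 leNgt h.
  have gs' : \sum_(k | predT k) - g k 0 = 0 by rewrite sumrN gs oppr0.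
  have g0 : g = 0.
    apply/matrixP => j i; rewrite (ord1 i) [RHS]mxE.
    by apply/eqP; rewrite -oppr_eq0; apply/eqP; apply: (psumr_eq0P hn gs').
  have : d^T *m Rp = 0 *m Rp.
    by rewrite mul0mx -[d^T *m Rp]trmxK trmx_mul trmxK -/g g0 trmx0.
  by move/(row_free_inj RF)/eqP; rewrite trmx_eq0 (negPf dn).
pose F j := (1 - (Rp^T *m z) j 0) / g j 0.
case: (arg_minP (P := fun j => 0 < g j 0) F gj0) => js gjs jsmin.
pose t := F js.
have t0 : 0 <= t by rewrite /t /F divr_ge0 // ?subr_ge0 // ltW.
exists (z + t *: d); split.
  move=> j; rewrite entry_add -/g.
  case: (ltP 0 (g j 0)) => gj.
    have := jsmin j gj; rewrite -/t /F ler_pdivlMr //; lra.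
  have : t * g j 0 <= 0 by rewrite mulr_ge0_le0.
  have := fz j; lra.
split.
  rewrite dot_add; have : t * (u^T *m d) 0 0 <= 0 by rewrite mulr_ge0_le0.
  lra.
set T' := tight Rp (z + t *: d).
have TT' : forall j, j \in T -> j \in T'.
  move=> j jT; rewrite /T' /tight inE entry_add -/g gT // mulr0 addr0.
  by move: jT; rewrite /T /tight inE.
have jsT' : js \in T'.
  rewrite /T' /tight inE entry_add -/g /t /F divfK; last by rewrite gt_eqF.
  by rewrite addrC subrK.
rewrite -(mxrank_tr (Rp *m dT T)) -(mxrank_tr (Rp *m dT T')).
apply: rank_ltmx; rewrite ltmxE; apply/andP; split.
  apply/row_subP => j; rewrite -tr_col col_dT.
  case jT: (j \in T).
    rewrite scale1r; have -> : (col j Rp)^T = row j (Rp *m dT T')^T.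
      by rewrite -tr_col col_dT TT' // scale1r.
    exact: row_sub.
  by rewrite scale0r trmx0 sub0mx.
apply/negP => sub.
have E : (col js Rp)^T = row js (Rp *m dT T')^T by rewrite -tr_col col_dT jsT' scale1r.
have hs : ((col js Rp)^T <= (Rp *m dT T)^T)%MS by rewrite E; apply: submx_trans (row_sub _ _) sub.
have Md : (Rp *m dT T)^T *m d = 0 by rewrite -[d]trmxK -trmx_mul dN trmx0.
have vd : (col js Rp)^T *m d != 0.
  apply/eqP => /matrixP/(_ 0 0); rewrite tr_col -row_mul [LHS]mxE [RHS]mxE -/g => e.
  by move: gjs; rewrite e ltxx.
by move: (not_sub_sep Md vd); rewrite hs.
Qed.

Lemma pivot D r (Rp : 'M[R]_(D,r)) (u : 'cV[R]_D) :
  row_free Rp -> Rp *m (const_mx 1 : 'cV[R]_r) = 0 ->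
  exists z, (forall j, (Rp^T *m z) j 0 <= 1) /\ (u^T *m z) 0 0 < 1 /\
    \rank (Rp *m dT (tight Rp z)) = D.
Proof.
move=> RF R1.
suff: forall n z, (forall j, (Rp^T *m z) j 0 <= 1) -> (u^T *m z) 0 0 < 1 ->
    (D - \rank (Rp *m dT (tight Rp z)) <= n)%N ->
    exists z, (forall j, (Rp^T *m z) j 0 <= 1) /\ (u^T *m z) 0 0 < 1 /\
      \rank (Rp *m dT (tight Rp z)) = D.
  move/(_ D 0); apply; last exact: leq_subr.
    by move=> j; rewrite mulmx0 mxE ler01.
  by rewrite mulmx0 mxE ltr01.
elim=> [|n IH] z fz uz hn.
  exists z; split => //; split => //; apply/eqP; rewrite eqn_leq rank_leq_row /=.
  by rewrite -subn_eq0 -leqn0.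
case: (ltnP (\rank (Rp *m dT (tight Rp z))) D) => [lt|ge].
  have [z' [fz' [uz' rz']]] := pivot_step u RF R1 fz lt.
  apply: (IH z' fz' (le_lt_trans uz' uz)); lia.
exists z; split => //; split => //; apply/eqP; rewrite eqn_leq rank_leq_row /=.
exact: ge.
Qed.

End Piv.


Section Crux.
Variable R : realFieldType.

Lemma col_c1 m r (c : 'cV[R]_m) j : col j (c *m (const_mx 1 : 'rV[R]_r)) = c.
Proof. by apply/colP => i; rewrite !mxE big_ord1 !mxE mulr1. Qed.

Lemma col_Wc1 m r (W : 'M[R]_(m,r)) (c : 'cV[R]_m) j :
  col j (W - c *m (const_mx 1 : 'rV[R]_r)) = col j W - c.
Proof. by apply/colP => i; rewrite !mxE big_ord1 !mxE mulr1. Qed.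

Lemma has_from_span m r D (S : 'cV[R]_m -> Prop) (c : 'cV[R]_m) (W : 'M[R]_(m,r))
  (G : 'M[R]_(D,m)) (T : {set 'I_r}) :
  (0 < D)%N -> (forall i, i \in T -> S (col i W)) ->
  \rank (G *m (W - c *m (const_mx 1 : 'rV[R]_r)) *m dT T) = D ->
  has_aff_indep S D.-1.
Proof.
move=> D0 hT rk.
have [i0 i0T] : exists i0, i0 \in T.
  case: (set_0Vmem T) => [T0|[x xT]]; last by exists x.
  move: rk; rewrite T0.
  have -> : dT (set0 : {set 'I_r}) = 0 :> 'M[R]_r.
    by apply/matrixP => i j; rewrite !mxE in_set0 mul0rn.
  by rewrite mulmx0 mxrank0 => D0'; move: D0; rewrite -D0'.
pose w0 := col i0 W.
pose Q0 := (W - w0 *m (const_mx 1 : 'rV[R]_r)) *m dT T.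
apply: (has_aff_indep_cols (S := S) (p := w0) (M := Q0)); first exact: hT.
  move=> j; rewrite /Q0 col_dT; case jT: (j \in T).
    by rewrite scale1r col_Wc1 addrC subrK; apply: hT.
  by rewrite scale0r addr0; apply: hT.
have E : W - c *m (const_mx 1 : 'rV[R]_r) =
    (W - w0 *m const_mx 1) + (w0 - c) *m (const_mx 1 : 'rV[R]_r).
  by rewrite mulmxBl addrA subrK.
move: rk; rewrite E mulmxDr mulmxDl => rk.
have h1 : (\rank (G *m ((w0 - c) *m (const_mx 1%R : 'rV[R]_r)) *m dT T) <= 1)%N.
  rewrite !mulmxA -(mulmxA (G *m (w0 - c))).
  apply: leq_trans (mxrankM_maxl _ _) _; exact: rank_leq_col.
have h2 : (\rank (G *m (W - w0 *m const_mx 1%R) *m dT T) <= \rank Q0)%N.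
  by rewrite -mulmxA; apply: mxrankM_maxr.
have := mxrank_add (G *m (W - w0 *m const_mx 1%R) *m dT T)
  (G *m ((w0 - c) *m (const_mx 1%R : 'rV[R]_r)) *m dT T).
rewrite rk; lia.
Qed.

End Crux.


Section Crux2.
Variable R : realFieldType.

Lemma span_conv m r (W : 'M[R]_(m,r)) c x :
  conv_cols W x -> ((x - c)^T <= (W - c *m (const_mx 1 : 'rV[R]_r))^T)%MS.
Proof.
case=> h [hs ->]; rewrite affine_simplex // trmx_mul; exact: submxMl.
Qed.

Lemma facet_avoid m r (W : 'M[R]_(m,r)) (x0 : 'cV[R]_m) :
  (0 < r)%N -> conv_cols W x0 ->
  (0 < \rank (W - (W *m (const_mx (r%:R^-1) : 'cV[R]_r)) *m (const_mx 1 : 'rV[R]_r))%R)%N ->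
  exists (a : 'cV[R]_m) (b : R),
    (forall x, conv_cols W x -> (a^T *m x) 0 0 <= b) /\ (a^T *m x0) 0 0 < b /\
    is_facet (conv_cols W) (fun x => conv_cols W x /\ (a^T *m x) 0 0 = b).
Proof.
move=> r0 [h0 [h0s ex0]].
set c := W *m (const_mx (r%:R^-1) : 'cV[R]_r).
set V := W - c *m (const_mx 1 : 'rV[R]_r).
set D := \rank V => D0.
have cP : conv_cols W c by exists (const_mx (r%:R^-1)); split => //; apply: unif_simplex.
pose B := col_base V; pose Rp := row_base V.
have BR : B *m Rp = V by apply: mulmx_base.
have RF : row_free Rp by apply: row_base_free.
have [Binv BinvB] : exists Binv, Binv *m B = 1%:M by apply/row_fullP; apply: col_base_full.
have V1 : V *m (const_mx 1 : 'cV[R]_r) = 0.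
  have : V *m (const_mx (r%:R^-1) : 'cV[R]_r) = 0.
    by rewrite -affine_simplex ?subrr //; apply: unif_simplex.
  have -> : (const_mx 1 : 'cV[R]_r) = r%:R *: (const_mx (r%:R^-1) : 'cV[R]_r).
    by apply/matrixP => i j; rewrite !mxE mulfV // pnatr_eq0 -lt0n.
  by rewrite -scalemxAr => ->; rewrite scaler0.
have R1 : Rp *m (const_mx 1 : 'cV[R]_r) = 0.
  by rewrite -[Rp]mul1mx -BinvB -(mulmxA Binv) -mulmxA BR V1 mulmx0.
have xc : forall h, in_simplex h -> W *m h - c = B *m (Rp *m h).
  by move=> h hs; rewrite affine_simplex // mulmxA BR.
pose u := Rp *m h0.
have [z [fz [uz rz]]] := pivot u RF R1.
pose a := Binv^T *m z.
have aB : a^T *m B = z^T by rewrite trmx_mul trmxK -mulmxA BinvB mulmx1.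
have key : forall h, in_simplex h -> (a^T *m (W *m h - c)) 0 0 = ((Rp *m h)^T *m z) 0 0.
  by move=> h hs; rewrite xc // mulmxA aB -dot11.
have le1 : forall h, in_simplex h -> ((Rp *m h)^T *m z) 0 0 <= 1.
  move=> h hs; rewrite trmx_mul -mulmxA; exact: dot_simplex.
pose b := (a^T *m c) 0 0 + 1.
have valid : forall x, conv_cols W x -> (a^T *m x) 0 0 <= b.
  move=> x [h [hs ->]]; have := key h hs; rewrite dotB => e.
  have := le1 h hs; rewrite /b; lra.
exists a, b; split => //; split.
  have := key h0 h0s; rewrite dotB -ex0 -/u dot11 => e.
  move: uz; rewrite /b; lra.
split; first by exists a, b; split => // x.
exists D.-1; rewrite prednK //; split; split.
- apply: (has_aff_indep_cols (p := c) (M := V)) => // j.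
  by rewrite col_Wc1 addrC subrK; apply: conv_col.
- move=> hh; have := has_in_span (c := c) (M := V) (@span_conv _ _ W c) hh.
  by rewrite ltnn.
- apply: (has_from_span (c := c) (W := W) (G := Binv) (T := tight Rp z)) => //.
    move=> i iT; split; first exact: conv_col.
    have e1 : (a^T *m (col i W - c)) 0 0 = 1.
      rewrite -col_Wc1 -/V -BR colE -(mulmxA B) (mulmxA a^T) aB -colE -entry_cT.
      by move: iT; rewrite inE => /eqP.
    by move: e1; rewrite dotB /b; lra.
  have -> : Binv *m V = Rp by rewrite -[X in Binv *m X]BR mulmxA BinvB mul1mx.
  exact: rz.
- move=> hh.
  have hyp : forall x, (conv_cols W x /\ (a^T *m x) 0 0 = b) ->
      ((x - c)^T <= V^T)%MS /\ (a^T *m (x - c)) 0 0 = 1.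
    move=> x [xP xb]; split; first exact: span_conv.
    by rewrite dotB xb /b; lra.
  by have := has_in_hyp (oner_neq0 R) hyp hh; rewrite prednK // ltnn.
Qed.

End Crux2.


Section Main.
Variable R : realFieldType.

Lemma col_mulmx m n p (A : 'M[R]_(m,n)) (B : 'M[R]_(n,p)) j :
  col j (A *m B) = A *m col j B.
Proof. by rewrite !colE mulmxA. Qed.

Lemma trivial_vertex n (M : 'M[R]_(0,n)) (th : 'cV[R]_0) :
  is_vertex (dual (conv_cols M)) th.
Proof.
split; first by move=> x _; rewrite mxE big_ord0 ler01.
by move=> a b t _ _ _ _ _; rewrite [a]flatmx0 [b]flatmx0.
Qed.

Lemma conv_sub_hyp m n (X : 'M[R]_(m,n)) (J : {set 'I_n}) (al : 'cV[R]_m) beta x :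
  (forall j, j \in J -> (al^T *m col j X) 0 0 = beta) ->
  conv_cols_sub X J x -> (al^T *m x) 0 0 = beta.
Proof.
move=> hJ [h [[h0 h1] [hz ->]]].
have hJ' : forall j, j \in J -> (al^T *m X) 0 j = beta.
  by move=> j jJ; rewrite -(hJ j jJ) -col_mulmx [RHS]mxE.
rewrite mulmxA; move: (al^T *m X) hJ' => A hA.
rewrite mxE -[beta]mul1r -h1 mulr_suml; apply: eq_bigr => j _.
case jJ: (j \in J); first by rewrite hA // mulrC.
by rewrite hz ?jJ // mulr0 mul0r.
Qed.

Lemma hyp_Q m k (S : 'cV[R]_m -> Prop) (p : 'cV[R]_m) (Q : 'M[R]_(m,k)) (al c : 'cV[R]_m) beta :
  S p -> (forall j, S (p + col j Q)) ->
  (forall x, S x -> (al^T *m (x - c)) 0 0 = beta) ->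
  Q^T *m al = 0 /\ ((p - c)^T *m al) 0 0 = beta.
Proof.
move=> Sp SQ hS; split; last by rewrite -dot11 hS.
apply/matrixP => j i; rewrite (ord1 i) entry_cT (diffE p (col j Q) c) dotB.
by rewrite !hS // subrr mxE.
Qed.

End Main.

End Helpers.
Import Helpers.


Theorem lemma2 (R : realFieldType) (m n r s d : nat)
  (X : 'M[R]_(m, n)) (W : 'M[R]_(m, r)) (H : 'M[R]_(r, n))
  (hX : forall i j, 0 <= X i j) (hH : forall i j, 0 <= H i j)
  (hXWH : X = W *m H)
  (hd : \rank X = d)
  (hFBC : FBC X W H s)
  (hrk : \rank (X - mean_col X *m const_mx 1) = d.-1)
  (U : 'M[R]_(m, d.-1))
  (hU : U^T *m U = 1%:M)
  (hSVD : exists (sigma : 'rV[R]_(d.-1)) (V : 'M[R]_(n, d.-1)),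
      (forall i, 0 < sigma 0 i) /\ V^T *m V = 1%:M /\
      X - mean_col X *m const_mx 1 = U *m diag_mx sigma *m V^T) :
  let Xt := U^T *m (X - mean_col X *m const_mx 1) in
  let Wt := U^T *m (W - mean_col X *m const_mx 1) in
  forall theta : 'cV[R]_(d.-1),
    is_vertex (dual (conv_cols Wt)) theta ->
    is_vertex (dual (conv_cols Xt)) theta.
Proof.
destruct d as [|[|k]]; try by move=> Xt Wt th _; apply: trivial_vertex.
move=> Xt Wt theta hv.
case: hFBC => _ [hB [hds [hC hD]]].
rewrite hd /= in hds hC hD.
set xb := mean_col X.
set Y := X - xb *m const_mx 1.
case: hSVD => sigma [V0 [_ [_ hY]]].
have YU : (Y^T <= U^T)%MS.
  by rewrite /Y /xb hY !trmx_mul mulmxA submxMl.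
have rU : \rank U = k.+1.
  apply/eqP; rewrite eqn_leq rank_leq_col /=.
  by rewrite -{1}(mxrank1 R k.+1) -hU mxrankM_maxr.
have n0 : (0 < n)%N by have := rank_leq_col X; rewrite hd; lia.
have r0 : (0 < r)%N.
  have := rank_leq_col W; have := mxrankM_maxl W H; rewrite -hXWH hd; lia.
have oneH : (const_mx 1 : 'rV[R]_r) *m H = const_mx 1.
  apply/matrixP => i j; rewrite (ord1 i) [RHS]mxE [LHS]mxE.
  by apply: etrans (proj2 (hB j)); apply: eq_bigr => l _; rewrite !mxE mul1r.
have XtWH : Xt = Wt *m H by rewrite /Xt /Wt -mulmxA mulmxBl -mulmxA oneH -hXWH.
have convXW : forall x, conv_cols X x -> conv_cols W x.
  by move=> x; rewrite hXWH; apply: conv_mulH.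
have xbX : xb = X *m (const_mx (n%:R^-1) : 'cV[R]_n).
  rewrite /xb /mean_col scalemxAr; congr (_ *m _).
  by apply/matrixP => i j; rewrite !mxE mulr1.
have xbP : conv_cols X xb.
  by exists (const_mx (n%:R^-1)); split => //; apply: unif_simplex.
have spanX : forall x, conv_cols X x -> ((x - xb)^T <= U^T)%MS.
  by move=> x hx; apply: submx_trans (span_conv xb hx) YU.
have convX_dim : aff_dim (conv_cols X) k.+1.
  split.
    apply: (has_aff_indep_cols (p := xb) (M := Y)) => //; last by rewrite hrk.
    by move=> j; rewrite col_Wc1 addrC subrK; apply: conv_col.
  by move=> hh; have := has_in_span spanX hh; rewrite rU ltnn.
have WA : forall i, ((col i W - xb)^T <= U^T)%MS.
  move=> i; case: (boolP ((col i W - xb)^T <= U^T)%MS) => // nA; exfalso.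
  pose c := W *m (const_mx (r%:R^-1) : 'cV[R]_r).
  pose hx := H *m (const_mx (n%:R^-1) : 'cV[R]_n).
  have hxs : in_simplex hx by apply: simplex_mul => //; apply: unif_simplex.
  have xbW : xb = W *m hx by rewrite xbX hXWH mulmxA.
  have rpos : (0 < \rank (W - c *m (const_mx 1 : 'rV[R]_r))%R)%N.
    rewrite lt0n mxrank_eq0; apply: contra nA => /eqP Vz.
    have -> : col i W - xb = col i (W - c *m const_mx 1) - (W *m hx - c).
      by rewrite col_Wc1 xbW opprB addrA subrK.
    by rewrite affine_simplex // Vz mul0mx col0 subrr trmx0 sub0mx.
  have [a [b [valid [strict facetF]]]] := facet_avoid r0 (convXW _ xbP) rpos.
  have [J [[hJin hJd] [sJ adJ]]] := hC _ facetF.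
  have adJ' : aff_dim (conv_cols_sub X J) k by move: adJ; rewrite !subSS subn0.
  pose G := fun x => conv_cols X x /\ (a^T *m x) 0 0 = b.
  have dimG : aff_dim G k.
    split.
      apply: (has_sub _ adJ'.1) => x xJ; split; first exact: conv_sub_conv xJ.
      by apply: (conv_sub_hyp _ xJ) => j jJ; exact: (hJin j jJ).2.
    move=> hh.
    have hyp : forall x, G x -> ((x - xb)^T <= U^T)%MS /\
        (a^T *m (x - xb)) 0 0 = b - (a^T *m xb) 0 0.
      by move=> x [xX xb']; split; [exact: spanX | rewrite dotB xb'].
    have bne : b - (a^T *m xb) 0 0 != 0 by rewrite subr_eq0 gt_eqF.
    by have := has_in_hyp bne hyp hh; rewrite rU ltnn.
  have facetG : is_facet (conv_cols X) G.
    split; last by exists k.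
    by exists a, b; split => // x xX; apply: valid; apply: convXW.
  have nfacetG : ~ is_facet (conv_cols W) G.
    move=> [_ [k' [dP dG']]].
    have ek := aff_dim_uniq dG' dimG; subst k'.
    apply: dP.2.
    pose v := col i W - xb.
    apply: (has_aff_indep_cols (p := xb) (M := row_mx Y v)); first exact: convXW.
      move=> j; case: (split_ordP j) => j' ->.
        have -> : col (lshift 1 j') (row_mx Y v) = col j' Y.
          by apply/colP => l; rewrite mxE row_mxEl [RHS]mxE.
        by apply: convXW; rewrite col_Wc1 addrC subrK; apply: conv_col.
      have -> : col (rshift n j') (row_mx Y v) = v.
        by apply/colP => l; rewrite mxE row_mxEr (ord1 j').
      by rewrite addrC subrK; apply: conv_col.
    rewrite -mxrank_tr tr_row_mx rank_colmx ?mxrank_tr ?hrk //.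
    by apply: contra nA => h; apply: submx_trans h YU.
  have distG : distinct_cols_in X J G.
    by split => // j jJ; split; [exact: conv_col | exact: (hJin j jJ).2].
  by have := hD G facetG nfacetG J distG; rewrite ltnNge sJ.
have WU : ((W - xb *m (const_mx 1 : 'rV[R]_r))^T <= U^T)%MS.
  by apply/row_subP => j; rewrite -tr_col col_Wc1; apply: WA.
have spanW : forall x, conv_cols W x -> ((x - xb)^T <= U^T)%MS.
  by move=> x hx; apply: submx_trans (span_conv xb hx) WU.
have [Dth ext] := hv.
have /dualP Dth' := Dth.
have rT := vertex_span hv.
pose a := U *m theta.
pose b := (a^T *m xb) 0 0 + 1.
have aTg : forall (v : 'cV[R]_(k.+1)) (x : 'cV[R]_m), ((U *m v)^T *m x) 0 0 = (v^T *m (U^T *m x)) 0 0.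
  by move=> v x; rewrite trmx_mul mulmxA.
have keyW : forall h, in_simplex h -> (a^T *m (W *m h - xb)) 0 0 <= 1.
  move=> h hs; rewrite aTg affine_simplex // mulmxA.
  rewrite dot11 trmx_mul -mulmxA; apply: dot_simplex => // j; exact: Dth'.
pose F := fun x => conv_cols W x /\ (a^T *m x) 0 0 = b.
have facetF : is_facet (conv_cols W) F.
  split.
    exists a, b; split => // x [h [hs ->]]; have := keyW h hs.
    by rewrite dotB /b; lra.
  exists k; split; split.
  - exact: (has_sub convXW convX_dim.1).
  - by move=> hh; have := has_in_span spanW hh; rewrite rU ltnn.
  - apply: (has_from_span (c := xb) (W := W) (G := U^T) (T := tight Wt theta)) => //.
      move=> i iT; split; first exact: conv_col.
      have e1 : (a^T *m (col i W - xb)) 0 0 = 1.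
        rewrite aTg -col_Wc1 -col_mulmx -entry_cT.
        by move: iT; rewrite inE => /eqP.
      by move: e1; rewrite dotB /b; lra.
  - move=> hh.
    have hyp : forall x, F x -> ((x - xb)^T <= U^T)%MS /\ (a^T *m (x - xb)) 0 0 = 1.
      move=> x [xP xb']; split; first exact: spanW.
      by rewrite dotB xb' /b; lra.
    by have := has_in_hyp (oner_neq0 R) hyp hh; rewrite rU ltnn.
have [J [[hJin hJd] [sJ adJ]]] := hC _ facetF.
have adJ' : aff_dim (conv_cols_sub X J) k by move: adJ; rewrite !subSS subn0.
have [p [Q [Sp [SQ rQ]]]] := adJ'.1.
have tJ : forall j, j \in J -> (Xt^T *m theta) j 0 = 1.
  move=> j jJ; rewrite entry_cT /Xt col_mulmx col_Wc1 -aTg dotB (hJin j jJ).2 /b.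
  lra.
split.
  move=> x hx; apply: Dth; apply: (conv_mulH (H := H)) => //; by rewrite -XtWH.
move=> a' b' t Da' Db' t0 t1 eth.
have /dualP Da'' := Da'; have /dualP Db'' := Db'.
pose g := a' - b'.
have gJ : forall j, j \in J -> (Xt^T *m g) j 0 = 0.
  move=> j jJ; have := tJ j jJ; have ha := Da'' j; have hb := Db'' j.
  rewrite eth /g mulmxDr mulmxBr -!scalemxAr.
  move: (Xt^T *m a') (Xt^T *m b') ha hb => A B ha hb; rewrite !mxE => e.
  have p1 : 0 <= t * (1 - A j 0) by rewrite mulr_ge0 ?subr_ge0 // ltW.
  have p2 : 0 <= (1 - t) * (1 - B j 0) by rewrite mulr_ge0 ?subr_ge0 // ltW.
  have e1 : t * (1 - A j 0) = 0 by lra.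
  have e2 : (1 - t) * (1 - B j 0) = 0 by lra.
  move/eqP: e1; rewrite mulf_eq0 gt_eqF //= subr_eq0 => /eqP <-.
  move/eqP: e2; rewrite mulf_eq0 subr_eq0 (gt_eqF t1) /= subr_eq0 => /eqP <-.
  by rewrite subrr.
pose al := U *m g.
have hypal : forall x, conv_cols_sub X J x -> (al^T *m (x - xb)) 0 0 = 0.
  move=> x hx; rewrite dotB (conv_sub_hyp (beta := (al^T *m xb) 0 0) _ hx) ?subrr //.
  move=> j jJ; apply/eqP; rewrite -subr_eq0 -dotB aTg -col_Wc1 -col_mulmx -entry_cT.
  by rewrite gJ.
have hypa : forall x, conv_cols_sub X J x -> (a^T *m (x - xb)) 0 0 = 1.
  move=> x hx; rewrite dotB (conv_sub_hyp (beta := b) _ hx) /b; first by lra.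
  by move=> j jJ; exact: (hJin j jJ).2.
have [Qal pal] := hyp_Q Sp SQ hypal.
have [Qa pa] := hyp_Q Sp SQ hypa.
have QU : (Q^T <= U^T)%MS.
  apply: (span_diff (q := p) (c := xb)); first exact: spanX (conv_sub_conv Sp).
  by move=> j; apply: spanX (conv_sub_conv (SQ j)).
have rQU : \rank (Q^T *m U) = k.
  case/submxP: QU => Z QZ.
  have QUU : Q^T *m U *m U^T = Q^T by rewrite QZ -(mulmxA Z) hU mulmx1.
  apply/eqP; rewrite eqn_leq; apply/andP; split.
    by apply: leq_trans (mxrankM_maxl _ _) _; rewrite mxrank_tr rQ.
  by have := mxrankM_maxl (Q^T *m U) U^T; rewrite QUU mxrank_tr rQ.
pose N := col_mx (Q^T *m U) ((p - xb)^T *m U).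
have Nth : Q^T *m U *m theta = 0 by rewrite -mulmxA Qa.
have vth : (p - xb)^T *m U *m theta != 0.
  apply/negP => /eqP/matrixP/(_ 0 0); rewrite -mulmxA pa mxE => e.
  by move: (oner_neq0 R); rewrite e eqxx.
have rN : \rank N = k.+1 by rewrite /N rank_colmx ?rQU // (not_sub_sep Nth vth).
have [Ninv NinvN] : exists Ninv, Ninv *m N = 1%:M by apply/row_fullP; rewrite /row_full rN.
have Ng : N *m g = 0.
  rewrite /N mul_col_mx -!mulmxA -/al Qal.
  have -> : (p - xb)^T *m al = 0 by apply/matrixP => i j; rewrite !ord1 pal mxE.
  by rewrite col_mx0.
have g0 : g = 0 by rewrite -[g]mul1mx -NinvN -mulmxA Ng mulmx0.
by apply/eqP; rewrite -subr_eq0; apply/eqP.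
Qed.
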